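(* Let $\Gamma$ be a single-player extensive-form game without absentmindedness. Then $$\mathrm{VoR}^{\mathrm{opt}}(\Gamma)\le\frac{u_1(\mathrm{opt}(\mathrm{pr}_1(\Gamma)))}{\max_{z\in\mathcal Z}\chi(z)u_1(z)}\le\max_{h\in\mathcal H_c}\beta(h),$$ where by convention $\max_{h\in\mathcal H_c}\beta(h)=1$ if $\mathcal H_c=\emptyset$.
   Context: A single-player extensive-form game consists of a finite rooted tree (nodes $\mathcal H$, leaves $\mathcal Z$, actions $A_h$); nonterminal nodes belong to Player 1 or to chance; $\mathcal H_c$ is the set of chance nodes, each with a fixed distribution $\mathbb P_c(\cdot\mid h)$ on $A_h$; Player 1 has utility $u_1:\mathcal Z\to\mathbb R_{\ge0}$ and a partition of its nodes into infosets with common action sets $A_I$. For a node $h$ with root-to-$h$ path $(h_0,\dots,h_{d-1})$ (excluding $h$), $\mathrm{obs}(h)=(i_k,I_k,a_k)_k$ lists the player at $h_k$ (1 or chance), its infoset and the action taken; $\mathrm{obs}_1(h)$ is the restriction to Player 1. The game has absentmindedness if some infoset appears more than once among the $I_k$ in $\mathrm{obs}(h)$ for some $h$. $\mathrm{pr}_1(\Gamma)$ has the same tree and utilities, each infoset partitioned into classes of $h\sim h'\iff\mathrm{obs}_1(h)=\mathrm{obs}_1(h')$. $u_1(\mathrm{opt}(\cdot))$ is the maximum expected utility over behavioral strategies; $\mathrm{VoR}^{\mathrm{opt}}(\Gamma)=u_1(\mathrm{opt}(\mathrm{pr}_1(\Gamma)))/u_1(\mathrm{opt}(\Gamma))$.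 Chance coefficient: $\chi(z)=\prod_{k:\,i_k=c}\mathbb P_c(a_k\mid h_k)$ over the chance nodes on the path to $z$ (and $\chi(z)=1$ if there are none). Branching factor: for $h\in\mathcal H_c$ and $a\in A_h$, let $H_{ha}$ be the set of chance nodes in the subtree rooted at the child of $h$ reached by $a$; $b_h(a)=1$ if $H_{ha}=\emptyset$, else $b_h(a)=\max_{h'\in H_{ha}}\beta(h')$; $\beta(h)=\sum_{a\in A_h}b_h(a)$ (defined recursively from the bottom of the tree). *)

(* Defs.v *)
From HB Require Import structures.
From mathcomp Require Import all_boot all_order all_algebra.
From mathcomp Require Import boolp classical_sets reals.
From Stdlib Require List.
Set Implicit Arguments. Unset Strict Implicit. Unset Printing Implicit Defensive.
Import Order.TTheory GRing.Theory Num.Theory.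
Local Open Scope ring_scope.

(* A finite single-player extensive-form game tree.
   - [Leaf u]        : terminal node z with utility u_1(z) = u.
   - [PNode lab cs]    : Player-1 node in infoset (label) I; its actions are the
                       positions 0 .. size cs - 1, action i leads to child nth i cs.
   - [CNode cs]      : chance node; action j leads to the j-th child with
                       probability the first component of the j-th pair. *)
Inductive tree (R : Type) (L : Type) : Type :=
| Leaf of R
| PNode of L & seq (tree R L)
| CNode of seq (R * tree R L).

Arguments Leaf {R L}.
Arguments PNode {R L}.
Arguments CNode {R L}.

Section Games.
Variable R : realType.

(* maximum of a nonempty list (only used on nonempty lists) *)
Definition maxl (s : seq R) : R :=
  match s with [::] => 0 | x :: s' => foldr Num.max x s' end.

Definition suml (s : seq R) : R := foldr +%R 0 s.

Section Labels.
Variable L : Type.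

Fixpoint pnodes (t : tree R L) : seq (L * nat) :=
  match t with
  | Leaf _ => [::]
  | PNode lab cs => (lab, size cs) :: flatten (map pnodes cs)
  | CNode cs => flatten (map (fun pc => pnodes pc.2) cs)
  end.

Fixpoint wf_nodes (t : tree R L) : Prop :=
  match t with
  | Leaf u => 0 <= u
  | PNode _ cs => cs <> [::] /\ foldr (fun c P => wf_nodes c /\ P) True cs
  | CNode cs =>
      foldr (fun pc P => 0 <= pc.1 /\ P) True cs /\
      suml (map fst cs) = 1 /\
      foldr (fun pc P => wf_nodes pc.2 /\ P) True cs
  end.

Definition infosets_consistent (t : tree R L) : Prop :=
  forall J n m, List.In (J, n) (pnodes t) -> List.In (J, m) (pnodes t) -> n = m.

Definition wf_game (t : tree R L) : Prop := wf_nodes t /\ infosets_consistent t.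

(* No absentmindedness: along every root-to-node path, no Player-1 infoset
   is visited twice.  [seen] = infosets of the Player-1 ancestors. *)
Fixpoint no_am_from (seen : seq L) (t : tree R L) : Prop :=
  match t with
  | Leaf _ => True
  | PNode lab cs => ~ List.In lab seen /\
                  foldr (fun c P => no_am_from (lab :: seen) c /\ P) True cs
  | CNode cs => foldr (fun pc P => no_am_from seen pc.2 /\ P) True cs
  end.

Definition no_absentmindedness (t : tree R L) : Prop := no_am_from [::] t.

(* Behavioral strategies: sigma I a = probability of action a at infoset I. *)
Definition behavioral (sigma : L -> nat -> R) (t : tree R L) : Prop :=
  forall J n, List.In (J, n) (pnodes t) ->
    (forall a, (a < n)%N -> 0 <= sigma J a) /\ \sum_(a < n) sigma J a = 1.

Fixpoint eu (sigma : L -> nat -> R) (t : tree R L) : R :=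
  match t with
  | Leaf u => u
  | PNode lab cs =>
      (fix go (i : nat) (l : seq (tree R L)) : R :=
         match l with
         | [::] => 0
         | c :: l' => sigma lab i * eu sigma c + go i.+1 l'
         end) 0%N cs
  | CNode cs => foldr (fun pc acc => pc.1 * eu sigma pc.2 + acc) 0 cs
  end.

(* u_1(opt(t)) : the optimal (supremum = maximum) expected utility *)
Definition opt_value (t : tree R L) : R :=
  sup [set eu sigma t | sigma in [set sigma | behavioral sigma t]].

(* pr_1(Gamma): same tree, infoset I refined by obs_1(h), the sequence of
   (infoset, action) pairs of the Player-1 ancestors of h (root first). *)
Fixpoint pr1_from (o : seq (L * nat)) (t : tree R L) : tree R (L * seq (L * nat)) :=
  match t with
  | Leaf u => Leaf u
  | PNode lab cs =>
      PNode (lab, o)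
        ((fix go (i : nat) (l : seq (tree R L)) :=
            match l with
            | [::] => [::]
            | c :: l' => pr1_from (rcons o (lab, i)) c :: go i.+1 l'
            end) 0%N cs)
  | CNode cs => CNode (map (fun pc => (pc.1, pr1_from o pc.2)) cs)
  end.

Definition pr1 (t : tree R L) := pr1_from [::] t.


(* the pairs (chi(z), u_1(z)) over all leaves z; [chi] accumulates the
   product of the chance probabilities along the path *)
Fixpoint leaves_chi (chi : R) (t : tree R L) : seq (R * R) :=
  match t with
  | Leaf u => [:: (chi, u)]
  | PNode _ cs => flatten (map (leaves_chi chi) cs)
  | CNode cs => flatten (map (fun pc => leaves_chi (chi * pc.1) pc.2) cs)
  end.

Definition max_chi_u (t : tree R L) : R :=
  maxl (map (fun cu => cu.1 * cu.2) (leaves_chi 1 t)).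

(* b from the list of beta-values of the chance nodes H_{ha} below a child *)
Definition b_of (betas : seq R) : R := if betas is [::] then 1 else maxl betas.

Fixpoint chance_betas (t : tree R L) : seq R :=
  match t with
  | Leaf _ => [::]
  | PNode _ cs => flatten (map chance_betas cs)
  | CNode cs =>
      let bs := map (fun pc => chance_betas pc.2) cs in
      suml (map b_of bs) :: flatten bs
  end.

Definition max_beta (t : tree R L) : R := b_of (chance_betas t).

End Labels.

Definition VoR_opt (L : Type) (t : tree R L) : R := opt_value (pr1 t) / opt_value t.
End Games.

(* Main.v *)
Require Import Defs.
From HB Require Import structures.
From mathcomp Require Import all_boot all_order all_algebra.
From mathcomp Require Import boolp classical_sets reals.
From Stdlib Require List.
Import Order.TTheory GRing.Theory Num.Theory.
Local Open Scope ring_scope.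
Set Implicit Arguments. Unset Strict Implicit. Unset Printing Implicit Defensive.

Section S.
Variable R : realType.

Lemma foldr_and (T : Type) (Q : T -> Prop) (l : seq T) :
  foldr (fun c P => Q c /\ P) True l <-> (forall c, List.In c l -> Q c).
Proof.
elim: l => [|x l IH] /=; first by split.
split.
- by move=> [Hx /IH Hl] c [<-|Hc]; [|apply: Hl].
- move=> H; split; first by apply: H; left.
  by apply/IH => c Hc; apply: H; right.
Qed.

Lemma In_flatten (A B : Type) (f : A -> seq B) (l : seq A) y :
  List.In y (flatten (map f l)) <-> exists c, List.In c l /\ List.In y (f c).
Proof.
elim: l => [|x l IH] /=; first by split => // -[c []].
rewrite List.in_app_iff IH; split.
- by move=> [H|[c [H1 H2]]]; [exists x; split=> //; left | exists c; split=> //; right].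
- by move=> [c [[<-|H1] H2]]; [left|right; exists c].
Qed.

Lemma le_maxl (s : seq R) x : List.In x s -> x <= maxl s.
Proof.
case: s => [//|y s] /=.
elim: s y => [|z s IH] y /=; first by move=> [->|].
move=> [->|[<-|H]].
- by rewrite le_max; apply/orP; right; apply: IH; left.
- by rewrite le_max lexx.
- by rewrite le_max; apply/orP; right; apply: (IH y); right.
Qed.

Lemma maxl_le (s : seq R) b : 0 <= b -> (forall x, List.In x s -> x <= b) -> maxl s <= b.
Proof.
case: s => [//|y s] /= b0.
elim: s y => [|z s IH] y /= H; first by apply: H; left.
rewrite ge_max; apply/andP; split.
- by apply: H; right; left.
- by apply: IH => x [<-|Hx]; apply: H; [left| right; right].
Qed.

Lemma maxl_ge0 (s : seq R) : (forall x, List.In x s -> 0 <= x) -> 0 <= maxl s.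
Proof. case: s => [//|y s] H; apply: le_trans (le_maxl (s:=y::s) (or_introl erefl)); by apply: H; left. Qed.

Lemma b_of_ge1 (s : seq R) : (forall x, List.In x s -> 1 <= x) -> 1 <= b_of s.
Proof. case: s => [//|y s] H; apply: le_trans (le_maxl (s:=y::s) (or_introl erefl)); by apply: H; left. Qed.

Section T.
Variable L : Type.

Definition tree_ind' (P : tree R L -> Prop) (HL : forall u, P (Leaf u))
  (HP : forall lab cs, (forall c, List.In c cs -> P c) -> P (PNode lab cs))
  (HC : forall cs, (forall pc, List.In pc cs -> P pc.2) -> P (CNode cs)) : forall t, P t :=
 fix F t := match t with
 | Leaf u => HL u
 | PNode lab cs => HP lab cs ((fix G l : forall c, List.In c l -> P c :=
      match l with [::] => fun c H => match H with end
      | c' :: l' => fun c H => match H with or_introl E => eq_ind c' P (F c') c E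
                                | or_intror H' => G l' c H' end end) cs)
 | CNode cs => HC cs ((fix G l : forall pc, List.In pc l -> P pc.2 :=
      match l with [::] => fun c H => match H with end
      | c' :: l' => fun c H => match H with or_introl E => eq_ind c' (fun x => P x.2) (F c'.2) c E
                                | or_intror H' => G l' c H' end end) cs)
 end.

Fixpoint goE (sigma : L -> nat -> R) lab (i : nat) (l : seq (tree R L)) : R :=
  match l with [::] => 0 | c :: l' => sigma lab i * eu sigma c + goE sigma lab i.+1 l' end.

Lemma euP sigma lab cs : eu sigma (PNode lab cs) = goE sigma lab 0 cs.
Proof. rewrite /=; elim: cs 0%N => //= c cs IH i; by rewrite IH. Qed.

Fixpoint goP (o : seq (L * nat)) lab (i : nat) (l : seq (tree R L)) :=
  match l with [::] => [::] | c :: l' => pr1_from (rcons o (lab, i)) c :: goP o lab i.+1 l' end.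

Lemma pr1P o lab cs : pr1_from o (PNode lab cs) = PNode (lab, o) (goP o lab 0 cs).
Proof. rewrite /=; congr PNode; elim: cs 0%N => //= c cs IH i; by rewrite IH. Qed.


Lemma leaves_pr1 (t : tree R L) : forall o (c : R), leaves_chi c (pr1_from o t) = leaves_chi c t.
Proof.
elim/tree_ind': t => [u|lab cs H|cs H] o c //.
- rewrite pr1P /=; elim: cs H 0%N => //= x l IHl H i.
  rewrite H; last by left.
  by rewrite IHl // => c' Hc'; apply: H; right.
- rewrite /=; elim: cs H => //= x l IHl H.
  rewrite H; last by left.
  by rewrite IHl // => c' Hc'; apply: H; right.
Qed.

Lemma betas_pr1 (t : tree R L) : forall o, chance_betas (pr1_from o t) = chance_betas t.
Proof.
elim/tree_ind': t => [u|lab cs H|cs H] o //.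
- rewrite pr1P /=; elim: cs H 0%N => //= x l IHl H i.
  rewrite H; last by left.
  by rewrite IHl // => c' Hc'; apply: H; right.
- have E : map (fun pc => chance_betas pc.2) (map (fun pc => (pc.1, pr1_from o pc.2)) cs)
           = map (fun pc => chance_betas pc.2) cs.
    elim: cs H => //= x l IHl H.
    rewrite H; last by left.
    by rewrite IHl // => c' Hc'; apply: H; right.
  by rewrite /= E.
Qed.

Lemma wf_pr1 (t : tree R L) : forall o, wf_nodes t -> wf_nodes (pr1_from o t).
Proof.
elim/tree_ind': t => [u|lab cs H|cs H] o //.
- rewrite pr1P /= => -[Hne]; rewrite !foldr_and => Hw; split.
    by case: cs Hne {H Hw}.
  suff S : forall i c, List.In c (goP o lab i cs) -> wf_nodes c.
    exact: S.
  elim: cs {Hne} H Hw => //= x l IHl H Hw i c [<-|Hc].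
  + by apply: H; [left|apply: Hw; left].
  + apply: (IHl _ _ i.+1) => //.
    * by move=> c' Hc'; apply: H; right.
    * by move=> c' Hc'; apply: Hw; right.
- rewrite /= => -[]; rewrite !foldr_and => Hp [Hs Hw]; split; last split.
  + by move=> pc /List.in_map_iff [pc' [<- Hpc']]; apply: Hp.
  + by rewrite -map_comp.
  + by move=> pc /List.in_map_iff [pc' [<- Hpc']] /=; apply: H => //; apply: Hw.
Qed.


Lemma In_pnodes_P lab (cs : seq (tree R L)) x J n :
  List.In x cs -> List.In (J, n) (pnodes x) -> List.In (J, n) (pnodes (PNode lab cs)).
Proof. by move=> Hx HJ; right; apply/In_flatten; exists x. Qed.

Lemma In_pnodes_C (cs : seq (R * tree R L)) pc J n :
  List.In pc cs -> List.In (J, n) (pnodes pc.2) -> List.In (J, n) (pnodes (CNode cs)).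
Proof. by move=> Hx HJ; apply/(In_flatten (fun pc : R * tree R L => pnodes pc.2)); exists pc. Qed.

Lemma behav_P sigma lab (cs : seq (tree R L)) x :
  behavioral sigma (PNode lab cs) -> List.In x cs -> behavioral sigma x.
Proof. by move=> H Hx J n Hn; apply: H; apply: In_pnodes_P Hx Hn. Qed.

Lemma behav_C sigma (cs : seq (R * tree R L)) pc :
  behavioral sigma (CNode cs) -> List.In pc cs -> behavioral sigma pc.2.
Proof. by move=> H Hx J n Hn; apply: H; apply: In_pnodes_C Hx Hn. Qed.

Lemma pnodes_pos (t : tree R L) : wf_nodes t -> forall J n, List.In (J, n) (pnodes t) -> (0 < n)%N.
Proof.
elim/tree_ind': t => [u|lab cs H|cs H] //=.
- rewrite foldr_and => -[Hne Hw] J n [[_ <-]|/In_flatten [x [Hx Hn]]].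
  + by case: cs {H Hw} Hne.
  + by apply: (H x Hx (Hw x Hx) J n).
- rewrite !foldr_and => -[_ [_ Hw]] J n /(In_flatten (fun pc : R * tree R L => pnodes pc.2)) [x [Hx Hn]].
  by apply: (H x Hx (Hw x Hx) J n).
Qed.

Lemma suml_ge1 (s : seq R) : s <> [::] -> (forall x, List.In x s -> 1 <= x) -> 1 <= suml s.
Proof.
elim: s => [//|x s IH] _ H /=.
have H1 : 1 <= x by apply: H; left.
case: s IH H => [|y s] IH H; first by rewrite /= addr0.
have : 1 <= suml (y :: s) by apply: IH => // z Hz; apply: H; right.
rewrite /suml /= => H2.
apply: le_trans H1 _; rewrite lerDl; apply: le_trans H2; exact: ler01.
Qed.

Lemma betas_ge1 (t : tree R L) : wf_nodes t -> forall b, List.In b (chance_betas t) -> 1 <= b.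
Proof.
elim/tree_ind': t => [u|lab cs H|cs H] //=.
- rewrite foldr_and => -[_ Hw] b /In_flatten [x [Hx Hb]].
  by apply: (H x Hx (Hw x Hx)).
- rewrite !foldr_and => -[_ [Hs Hw]] b [<-|].
  + apply: suml_ge1.
    * case: cs {H Hw} Hs => [|x l] //=.
      by move/eqP; rewrite /suml /= eq_sym oner_eq0.
    * move=> y /List.in_map_iff [bs [<- /List.in_map_iff [pc [<- Hpc]]]].
      by apply: b_of_ge1; apply: H => //; apply: Hw.
  + move/(In_flatten (fun pc : R * tree R L => chance_betas pc.2)) => [pc [Hpc Hb]].
    by apply: (H pc Hpc (Hw pc Hpc)).
Qed.

Lemma Bt_ge1 (t : tree R L) : wf_nodes t -> 1 <= b_of (chance_betas t).
Proof. by move=> W; apply: b_of_ge1; apply: betas_ge1. Qed.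

Lemma leaves_ge0 (t : tree R L) : wf_nodes t -> forall c, 0 <= c ->
  forall x, List.In x (leaves_chi c t) -> 0 <= x.1 /\ 0 <= x.2.
Proof.
elim/tree_ind': t => [u|lab cs H|cs H] /=.
- by move=> Hu c Hc x [<-|].
- rewrite foldr_and => -[_ Hw] c Hc x /In_flatten [y [Hy Hx]].
  by apply: (H y Hy (Hw y Hy) c Hc).
- rewrite !foldr_and => -[Hp [_ Hw]] c Hc x
    /(In_flatten (fun pc : R * tree R L => leaves_chi (c * pc.1) pc.2)) [y [Hy Hx]].
  by apply: (H y Hy (Hw y Hy) (c * y.1)) => //; apply: mulr_ge0 => //; apply: Hp.
Qed.

Definition Mc (t : tree R L) (c : R) := maxl (map (fun cu => cu.1 * cu.2) (leaves_chi c t)).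

Lemma Mc_ge0 (t : tree R L) c : wf_nodes t -> 0 <= c -> 0 <= Mc t c.
Proof.
move=> W Hc; apply: maxl_ge0 => y /List.in_map_iff [x [<- Hx]].
by have [] := leaves_ge0 W Hc Hx; apply: mulr_ge0.
Qed.

Lemma maxl_sub (s1 s2 : seq R) : (forall y, List.In y s1 -> List.In y s2) -> 0 <= maxl s2 ->
  maxl s1 <= maxl s2.
Proof. by move=> H H0; apply: maxl_le => // y Hy; apply: le_maxl; apply: H. Qed.

Lemma Mc_sub (t1 t2 : tree R L) c1 c2 :
  (forall x, List.In x (leaves_chi c1 t1) -> List.In x (leaves_chi c2 t2)) ->
  0 <= Mc t2 c2 -> Mc t1 c1 <= Mc t2 c2.
Proof.
move=> H H0; apply: maxl_sub => // y /List.in_map_iff [x [<- Hx]].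
by apply/List.in_map_iff; exists x; split => //; apply: H.
Qed.

Lemma b_of_sub (s1 s2 : seq R) : (forall y, List.In y s1 -> List.In y s2) ->
  (forall y, List.In y s2 -> 1 <= y) -> b_of s1 <= b_of s2.
Proof.
move=> H H1; case: s1 H => [|y s1] H; first exact: b_of_ge1.
have Hb : 1 <= b_of s2 by apply: b_of_ge1.
change (maxl (y :: s1) <= b_of s2); apply: maxl_le; first by apply: le_trans Hb.
move=> z Hz; have Hz2 := H z Hz.
by case: s2 H1 Hb Hz2 {H} => // w s2 _ _ Hz2; apply: le_maxl.
Qed.

Lemma goE_bound sigma lab c K (l : seq (tree R L)) i : 0 <= c ->
  (forall k, (k < size l)%N -> 0 <= sigma lab (i + k)%N) ->
  (forall x, List.In x l -> c * eu sigma x <= K) ->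
  c * goE sigma lab i l <= K * \sum_(k < size l) sigma lab (i + k)%N.
Proof.
move=> Hc; elim: l i => [|x l IH] i Hs Hx /=; first by rewrite big_ord0 !mulr0.
rewrite big_ord_recl mulrDr mulrDr addn0.
apply: lerD.
- rewrite mulrCA mulrC; apply: ler_wpM2r; first by rewrite -(addn0 i); apply: Hs.
  by apply: Hx; left.
- have -> : \sum_(k < size l) sigma lab (i + bump 0 k)%N = \sum_(k < size l) sigma lab (i.+1 + k)%N.
    by apply: eq_bigr => k _; rewrite /bump /= add1n addnS addSn.
  apply: IH.
  + by move=> k Hk; rewrite addSn -addnS; apply: Hs.
  + by move=> y Hy; apply: Hx; right.
Qed.

Lemma foldC_bound sigma c M (cs : seq (R * tree R L)) :
  (forall pc, List.In pc cs -> c * (pc.1 * eu sigma pc.2) <= b_of (chance_betas pc.2) * M) ->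
  c * foldr (fun pc acc => pc.1 * eu sigma pc.2 + acc) 0 cs <=
  M * suml (map (@b_of R) (map (fun pc => chance_betas pc.2) cs)).
Proof.
elim: cs => [|x l IH] H /=; first by rewrite !mulr0.
rewrite mulrDr [M * _]mulrDr [M * _]mulrC; apply: lerD.
- by apply: H; left.
- by apply: IH => pc Hpc; apply: H; right.
Qed.

Lemma L1 (t : tree R L) : wf_nodes t -> forall sigma, behavioral sigma t ->
  forall c, 0 <= c -> c * eu sigma t <= b_of (chance_betas t) * Mc t c.
Proof.
elim/tree_ind': t => [u|lab cs H|cs H] W sigma Hb c Hc.
- by rewrite /= /Mc /= mul1r.
- have [Hne Hw] : cs <> [::] /\ (forall c, List.In c cs -> wf_nodes c).
    by move: (W) => /= -[Hne]; rewrite foldr_and.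
  have Hpos : List.In (lab, size cs) (pnodes (PNode lab cs)) by left.
  have [Hs0 Hs1] := Hb _ _ Hpos.
  rewrite euP.
  have Hbt : 0 <= b_of (chance_betas (PNode lab cs)) by apply: le_trans (Bt_ge1 W); exact: ler01.
  have HM := Mc_ge0 W Hc.
  apply: le_trans (goE_bound (K := b_of (chance_betas (PNode lab cs)) * Mc (PNode lab cs) c) (i := 0%N) Hc _ _) _.
  + by move=> k Hk; apply: Hs0.
  + move=> x Hx; apply: le_trans (H x Hx (Hw x Hx) sigma (behav_P Hb Hx) c Hc) _.
    apply: ler_pM.
    * by apply: le_trans (Bt_ge1 (Hw x Hx)); exact: ler01.
    * exact: Mc_ge0 (Hw x Hx) Hc.
    * apply: b_of_sub; last by apply: betas_ge1.
      by move=> y Hy; apply/In_flatten; exists x.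
    * apply: Mc_sub => // y Hy; apply/In_flatten; exists x; split => //.
  + have -> : \sum_(k < size cs) sigma lab (0 + k)%N = \sum_(k < size cs) sigma lab k.
      by apply: eq_bigr => k _; rewrite add0n.
    by rewrite Hs1 mulr1.
- have [Hp Hw] : (forall pc, List.In pc cs -> 0 <= pc.1) /\ (forall pc, List.In pc cs -> wf_nodes pc.2).
    by move: (W) => /= -[]; rewrite !foldr_and => Hp [Hs Hw].
  have HM := Mc_ge0 W Hc.
  rewrite /=.
  set beta := suml _.
  apply: le_trans (foldC_bound (M := Mc (CNode cs) c) _) _.
  + move=> pc Hpc; rewrite mulrA.
    have Hc' : 0 <= c * pc.1 by apply: mulr_ge0 => //; apply: Hp.
    apply: le_trans (H pc Hpc (Hw pc Hpc) sigma (behav_C Hb Hpc) _ Hc') _.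
    apply: ler_wpM2l; first by apply: le_trans (Bt_ge1 (Hw pc Hpc)); exact: ler01.
    apply: Mc_sub => // y Hy.
    by apply/(In_flatten (fun pc : R * tree R L => leaves_chi (c * pc.1) pc.2)); exists pc.
  + rewrite mulrC; apply: ler_wpM2r => //.
    by apply: (@le_maxl (beta :: flatten [seq chance_betas pc.2 | pc <- cs])); left.
Qed.


Lemma In_nth (A : Type) (l : seq A) x : List.In x l -> exists2 k, (k < size l)%N & nth x l k = x.
Proof.
elim: l => [//|y l IH] /= [->|H]; first by exists 0%N.
by have [k Hk E] := IH H; exists k.+1.
Qed.

Lemma goE_ge sigma lab (l : seq (tree R L)) d : (forall J a, 0 <= sigma J a) ->
  (forall y, List.In y l -> 0 <= eu sigma y) -> forall i k, (k < size l)%N ->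
  sigma lab (i + k)%N * eu sigma (nth d l k) <= goE sigma lab i l.
Proof.
move=> Hs; elim: l => [//|x l IH] He i [|k] /= Hk.
- rewrite addn0 lerDl.
  elim: l {IH Hk} (i.+1) He => [|z l IHl] j He' /=; first by [].
  apply: addr_ge0; first by apply: mulr_ge0 => //; apply: He'; right; left.
  by apply: IHl => y [<-|Hy]; apply: He'; [left | right; right].
- rewrite addnS -addSn; apply: le_trans (IH _ i.+1 k Hk) _.
  + by move=> y Hy; apply: He; right.
  + by rewrite lerDr; apply: mulr_ge0; [apply: Hs | apply: He; left].
Qed.

Lemma eu_ge0 (t : tree R L) sigma : wf_nodes t -> (forall J a, 0 <= sigma J a) -> 0 <= eu sigma t.
Proof.
move=> W Hs; elim/tree_ind': t W => [u|lab cs H|cs H] W.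
- by [].
- have [Hne Hw] : cs <> [::] /\ (forall c, List.In c cs -> wf_nodes c).
    by move: (W) => /= -[Hne]; rewrite foldr_and.
  rewrite euP; elim: cs 0%N {Hne W} H Hw => [|x l IHl] i H Hw //=.
  apply: addr_ge0.
  + by apply: mulr_ge0 => //; apply: H; [left|apply: Hw; left].
  + by apply: IHl => y Hy; [apply: H; right | apply: Hw; right].
- have [Hp Hw] : (forall pc, List.In pc cs -> 0 <= pc.1) /\ (forall pc, List.In pc cs -> wf_nodes pc.2).
    by move: (W) => /= -[]; rewrite !foldr_and => Hp [Hs' Hw].
  rewrite /=; elim: cs {W} H Hp Hw => [|x l IHl] H Hp Hw //=.
  apply: addr_ge0.
  + by apply: mulr_ge0; [apply: Hp; left| apply: H; [left|apply: Hw; left]].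
  + by apply: IHl => y Hy; [apply: H; right | apply: Hp; right | apply: Hw; right].
Qed.

Lemma foldC_ge sigma (cs : seq (R * tree R L)) pc :
  (forall pc, List.In pc cs -> 0 <= pc.1 * eu sigma pc.2) -> List.In pc cs ->
  pc.1 * eu sigma pc.2 <= foldr (fun pc acc => pc.1 * eu sigma pc.2 + acc) 0 cs.
Proof.
elim: cs => [//|x l IH] H /= [<-|Hpc].
- rewrite lerDl; elim: l {IH} H => [|z l IHl] H' //=.
  apply: addr_ge0; first by apply: H'; right; left.
  by apply: IHl => y [<-|Hy]; apply: H'; [left | right; right].
- apply: le_trans (IH _ Hpc) _; first by move=> y Hy; apply: H; right.
  by rewrite lerDr; apply: H; left.
Qed.

Lemma path_ex (t : tree R L) : forall seen, no_am_from seen t -> wf_nodes t ->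
  forall c, 0 <= c -> forall x, List.In x (leaves_chi c t) ->
  exists P : seq (L * nat),
   (forall J a, List.In (J, a) P -> ~ List.In J seen /\
       exists n, List.In (J, n) (pnodes t) /\ (a < n)%N) /\
   List.NoDup (map fst P) /\
   forall sigma, (forall J a, 0 <= sigma J a) -> (forall J a, List.In (J, a) P -> sigma J a = 1) ->
     x.1 * x.2 <= c * eu sigma t.
Proof.
elim/tree_ind': t => [u|lab cs H|cs H] seen NA W c Hc x.
- move=> [<-|] //=; exists [::]; split => //; split; first by constructor.
  by move=> sigma _ _; rewrite /=.
- have [Hne Hw] : cs <> [::] /\ (forall c, List.In c cs -> wf_nodes c).
    by move: (W) => /= -[Hne]; rewrite foldr_and.
  have [Hlab Hna] : ~ List.In lab seen /\ (forall c, List.In c cs -> no_am_from (lab :: seen) c).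
    by move: (NA) => /= -[Hl]; rewrite foldr_and.
  move=> Hx0; have /In_flatten [y [Hy Hx]] : List.In x (flatten (map (leaves_chi c) cs)) := Hx0.
  have [P [HP1 [HP2 HP3]]] := H y Hy (lab :: seen) (Hna y Hy) (Hw y Hy) c Hc x Hx.
  have [k Hk Ek] := In_nth Hy.
  exists ((lab, k) :: P); split; last split.
  + move=> J a [[<- <-]|HJ].
    * by split => //; exists (size cs); split => //; left.
    * have [HJ1 [n [Hn1 Hn2]]] := HP1 J a HJ; split.
        by move=> HJs; apply: HJ1; right.
      by exists n; split => //; apply: In_pnodes_P Hy Hn1.
  + constructor => // /List.in_map_iff [[J a] [/= E HJ]].
    by have [HJ1 _] := HP1 J a HJ; apply: HJ1; left.
  + move=> sigma Hs Hsig.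
    apply: le_trans (HP3 sigma Hs (fun J a HJ => Hsig J a (or_intror HJ))) _.
    apply: ler_wpM2l => //; rewrite euP.
    have := @goE_ge sigma lab cs y Hs (fun z Hz => eu_ge0 (Hw z Hz) Hs) 0%N k Hk.
    by rewrite add0n Ek Hsig ?mul1r //; left.
- have [Hp Hw] : (forall pc, List.In pc cs -> 0 <= pc.1) /\ (forall pc, List.In pc cs -> wf_nodes pc.2).
    by move: (W) => /= -[]; rewrite !foldr_and => Hp [Hs' Hw].
  have Hna : forall pc, List.In pc cs -> no_am_from seen pc.2.
    by move: (NA) => /=; rewrite foldr_and.
  move=> /= /(In_flatten (fun pc : R * tree R L => leaves_chi (c * pc.1) pc.2)) [pc [Hpc Hx]].
  have Hc' : 0 <= c * pc.1 by apply: mulr_ge0 => //; apply: Hp.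
  have [P [HP1 [HP2 HP3]]] := H pc Hpc seen (Hna pc Hpc) (Hw pc Hpc) _ Hc' x Hx.
  exists P; split; last split => //.
  + move=> J a HJ; have [HJ1 [n [Hn1 Hn2]]] := HP1 J a HJ; split => //.
    by exists n; split => //; apply: In_pnodes_C Hpc Hn1.
  + move=> sigma Hs Hsig; apply: le_trans (HP3 sigma Hs Hsig) _.
    rewrite -mulrA; apply: ler_wpM2l => //.
    apply: foldC_ge => // pc' Hpc'; apply: mulr_ge0; first by apply: Hp.
    exact: eu_ge0 (Hw pc' Hpc') Hs.
Qed.

Fixpoint pick (J : L) (P : seq (L * nat)) : option nat :=
  match P with [::] => None | (J', a) :: P' => if `[< J = J' >] then Some a else pick J P' end.

Lemma pick_In J P a : pick J P = Some a -> List.In (J, a) P.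
Proof.
elim: P => [//|[J' a'] P IH] /=.
case: (asboolP (J = J')) => [-> [<-]|_ H]; first by left.
by right; apply: IH.
Qed.

Lemma In_pick J P a : List.NoDup (map fst P) -> List.In (J, a) P -> pick J P = Some a.
Proof.
elim: P => [//|[J' a'] P IH] /= ND [[<- <-]|HJ].
- by rewrite asboolT.
- inversion ND as [|x l Hn ND']; subst.
  rewrite asboolF; first by apply: IH.
  move=> E; subst J'; apply: Hn; apply/List.in_map_iff; by exists (J, a).
Qed.

Definition sigmaP (P : seq (L * nat)) (J : L) (a : nat) : R :=
  match pick J P with Some a' => (a == a')%:R | None => (a == 0%N)%:R end.

Lemma sum_delta n a' : (a' < n)%N -> \sum_(a < n) ((a : nat) == a')%:R = 1 :> R.
Proof.
move=> H; rewrite (bigD1 (Ordinal H)) //= eqxx big1 ?addr0 // => i Hi.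
suff -> : ((i : nat) == a') = false by [].
apply/negbTE; apply: contra Hi => /eqP E; apply/eqP; apply: val_inj; exact: E.
Qed.

Lemma sigmaP_behav (t : tree R L) P : wf_nodes t -> infosets_consistent t ->
  (forall J a, List.In (J, a) P -> exists n, List.In (J, n) (pnodes t) /\ (a < n)%N) ->
  behavioral (sigmaP P) t.
Proof.
move=> W Hcons HP J n Hn; rewrite /sigmaP.
case E: (pick J P) => [a'|]; split.
- by move=> a _; rewrite ler0n.
- have [n' [Hn' Ha']] := HP J a' (pick_In E).
  by rewrite (Hcons J n n' Hn Hn'); apply: sum_delta.
- by move=> a _; rewrite ler0n.
- by apply: sum_delta; apply: (pnodes_pos W Hn).
Qed.

Definition sigma0 (J : L) (a : nat) : R := (a == 0%N)%:R.

Lemma sigma0_behav (t : tree R L) : wf_nodes t -> behavioral sigma0 t.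
Proof.
move=> W J n Hn; split; first by move=> a _; rewrite ler0n.
by apply: sum_delta; apply: (pnodes_pos W Hn).
Qed.

Lemma opt_ub (t : tree R L) K s0 : behavioral s0 t ->
  (forall sigma, behavioral sigma t -> eu sigma t <= K) -> opt_value t <= K.
Proof.
move=> H0 H; apply: ge_sup.
- by exists (eu s0 t); exists s0.
- by move=> y [sigma Hs <-]; apply: H.
Qed.

Lemma opt_lb (t : tree R L) K s : behavioral s t ->
  (forall sigma, behavioral sigma t -> eu sigma t <= K) -> eu s t <= opt_value t.
Proof.
move=> H0 H; apply: sup_upper_bound; last by exists s.
split; first by exists (eu s t); exists s.
by exists K => y [sigma Hs <-]; apply: H.
Qed.

End T.
End S.

Unset Implicit Arguments.

Theorem proposition8 (R : realType) (L : Type) (G : tree R L) :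
  wf_game G -> no_absentmindedness G ->
  VoR_opt G <= opt_value (pr1 G) / max_chi_u G /\
  opt_value (pr1 G) / max_chi_u G <= max_beta G.
Proof.
move=> [W Hcons] NA.
have W1 : wf_nodes (pr1 G) := wf_pr1 [::] W.
set A := opt_value (pr1 G); set O := opt_value G.
set M := max_chi_u G; set B := max_beta G.
have EM : Mc (pr1 G) 1 = M by rewrite /Mc /pr1 leaves_pr1.
have EB : b_of (chance_betas (pr1 G)) = B by rewrite /pr1 betas_pr1.
have bnd1 : forall sigma, behavioral sigma (pr1 G) -> eu sigma (pr1 G) <= B * M.
  move=> sigma Hs; rewrite -EM -EB -[eu _ _]mul1r; exact: L1 W1 sigma Hs 1 ler01.
have bnd0 : forall sigma, behavioral sigma G -> eu sigma G <= B * M.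
  move=> sigma Hs; rewrite -[eu _ _]mul1r; exact: L1 W sigma Hs 1 ler01.
have hA : A <= B * M := opt_ub (sigma0_behav W1) bnd1.
have s0ge0 : forall (J : L * seq (L * nat)) a, 0 <= sigma0 R J a by move=> J a; rewrite ler0n.
have hA0 : 0 <= A.
  apply: le_trans (opt_lb (sigma0_behav W1) bnd1).
  exact: eu_ge0 W1 s0ge0.
have hO0 : 0 <= O.
  apply: le_trans (opt_lb (sigma0_behav W) bnd0).
  by apply: eu_ge0 W _ => J a; rewrite ler0n.
have hM0 : 0 <= M := Mc_ge0 W ler01.
have hB1 : 1 <= B := Bt_ge1 W.
have hMO : M <= O.
  apply: maxl_le => // y /List.in_map_iff [x [<- Hx]].
  have [P [HP1 [HP2 HP3]]] := path_ex NA W ler01 Hx.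
  have HPb : behavioral (sigmaP R P) G.
    apply: sigmaP_behav => // J a HJ; exact: (proj2 (HP1 J a HJ)).
  apply: le_trans (HP3 (sigmaP R P) _ _) _.
  - by move=> J a; rewrite /sigmaP; case: pick => [?|]; rewrite ler0n.
  - by move=> J a HJ; rewrite /sigmaP (In_pick HP2 HJ) eqxx.
  - by rewrite mul1r; apply: opt_lb HPb bnd0.
have [M0|Mpos] := eqVneq M 0.
- have A0 : A = 0 by apply/eqP; rewrite eq_le hA0 andbT; move: hA; rewrite M0 mulr0.
  rewrite /VoR_opt -/A -/O A0 M0 !mul0r; split => //.
  by apply: le_trans hB1; exact: ler01.
- have Mgt0 : 0 < M by rewrite lt_def Mpos hM0.
  have Ogt0 : 0 < O by apply: lt_le_trans hMO.
  split.
  + rewrite /VoR_opt -/A -/O; apply: ler_wpM2l => //.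
    by rewrite lef_pV2 // posrE.
  + by rewrite ler_pdivrMr.
Qed.
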